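(* Let $0<p<1/2$ be a constant, let $\varepsilon,\delta\in(0,1)$, and let $T$ be a tree with $n$ edges, each of which is either realized or not, accessed through a 2-sided noisy oracle with error probability $p$. Consider the following algorithm $\mathcal{A}$ (with parameters $\varepsilon,\delta,p$). Set $c=\lceil \log_{\frac{1-p}{p}}(1/\delta)\rceil$ (the threshold) and a global budget $B=\lceil \frac{1}{\varepsilon}\cdot\frac{1}{1-2p}\rceil\cdot c\cdot n$. Process the edges of $T$ one after another in a fixed order. For the current edge $e$, set a counter to $0$; while the counter is $<c$ and $B>0$: query $e$, decrease $B$ by $1$, and increase the counter by $1$ if the answer is ``Yes'' and decrease it by $1$ if the answer is ``No''. After this loop, if $B=0$, output False (``disconnected'') and stop; otherwise move to the next edge. If all edges are processed, output True (``connected''). Then: if all edges of $T$ are realized ($T$ is connected), $\mathcal{A}$ outputs True with probability at least $1-\varepsilon$; if at least one edge of $T$ is not realized ($T$ is disconnected), $\mathcal{A}$ outputs False with probability at least $1-\delta$; and $\mathcal{A}$ performs at most $O\!\left(\frac{1}{\varepsilon}\, n\log\frac{1}{\delta}\right)$ queries.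
   Context: Noisy edge-query model: each edge of a given graph is either realized or non-realized (fixed arbitrarily, possibly adversarially, in advance). An algorithm can query an oracle on an edge $e$, asking ``Is $e$ realized?'', and receives ``Yes'' or ``No''; each query costs $1$. Answers to distinct queries (including repeated queries on the same edge) are independent. In the 2-sided error regime with error probability $p<1/2$ (a constant), each answer is wrong (``No'' for a realized edge, ``Yes'' for a non-realized edge) with probability $p$ and correct with probability $1-p$. A tree is called connected if all its edges are realized and disconnected otherwise. *)

(* Defs.v *)
From mathcomp Require Import all_boot all_order all_algebra.
From mathcomp Require Import all_classical all_reals all_analysis.
Set Implicit Arguments. Unset Strict Implicit. Unset Printing Implicit Defensive.
Import Order.TTheory GRing.Theory Num.Theory.
Local Open Scope ring_scope.

(* Source of randomness: omega k = true  iff the answer to the k-th query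
   (counting all queries of the run, k = 0,1,2,...) is CORRECT. *)

Fixpoint edge_loop (c : int) (truth : bool) (cnt : int) (budget pos : nat)
  (omega : nat -> bool) : nat * nat :=
  match budget with
  | 0%N => (0%N, pos)
  | b.+1 =>
      if cnt < c then
        let ans := if omega pos then truth else ~~ truth in
        edge_loop c truth (if ans then cnt + 1 else cnt - 1) b pos.+1 omega
      else (budget, pos)
  end.

(* Outer loop over the edges (list of their realization statuses, in the
   fixed processing order).  Returns (output, index of next query), the
   second component being the number of queries made when started at 0. *)
Fixpoint run_edges (c : nat) (edges : seq bool) (budget pos : nat)
  (omega : nat -> bool) : bool * nat :=
  match edges with
  | [::] => (true, pos)
  | e :: es =>
      let bp := edge_loop c%:Z e 0 budget pos omega in
      if bp.1 == 0%N then (false, bp.2)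
      else run_edges c es bp.1 bp.2 omega
  end.

Section Alg.
Variable R : realType.

Definition threshold (p delta : R) : nat :=
  `|Num.ceil (ln (delta^-1) / ln ((1 - p) / p))|%N.

Definition budget (p eps delta : R) (n : nat) : nat :=
  (`|Num.ceil (eps^-1 * (1 - 2 * p)^-1)|%N * threshold p delta * n)%N.

Definition alg (p eps delta : R) (n : nat) (r : 'I_n -> bool)
  (omega : nat -> bool) : bool * nat :=
  run_edges (threshold p delta) [seq r i | i <- enum 'I_n]
    (budget p eps delta n) 0 omega.

(* Probability space of the answers: N independent queries, each answer
   correct with probability 1 - p.  omega : {ffun 'I_N -> bool} is extended
   to nat (positions >= N never get used when N >= number of queries). *)
Definition ext (N : nat) (w : {ffun 'I_N -> bool}) (k : nat) : bool :=
  match insub k with Some i => w i | None => true end.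

Definition weight (p : R) (N : nat) (w : {ffun 'I_N -> bool}) : R :=
  \prod_(i < N) (if w i then 1 - p else p).

Definition prob (p : R) (N : nat) (E : (nat -> bool) -> bool) : R :=
  \sum_(w : {ffun 'I_N -> bool} | E (ext w)) weight p w.

(* Probability that A outputs [b]; the algorithm makes at most
   budget p eps delta n queries, so N := that budget suffices. *)
Definition prob_output (p eps delta : R) (n : nat) (r : 'I_n -> bool)
  (b : bool) : R :=
  prob p (budget p eps delta n) (fun omega => (alg p eps delta r omega).1 == b).

End Alg.

(* Main.v *)
Require Import Defs.
From mathcomp Require Import all_boot all_order all_algebra.
From mathcomp Require Import all_classical all_reals all_analysis.
From mathcomp Require Import ring lra zify.
Import Order.TTheory GRing.Theory Num.Theory.
Local Open Scope ring_scope.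

Definition om0 : nat -> bool := fun _ => true.
Definition scons (a : bool) (w : nat -> bool) : nat -> bool :=
  fun k => if k is k'.+1 then w k' else a.

Lemma scons_om0 : scons true om0 = om0.
Proof. by apply: funext => -[|k]. Qed.

Lemma loop_shift c t cnt b pos a w :
  edge_loop c t cnt b pos.+1 (scons a w) =
  ((edge_loop c t cnt b pos w).1, (edge_loop c t cnt b pos w).2.+1).
Proof.
elim: b cnt pos => [|b IH] cnt pos //=.
by case: ifP => // _; rewrite IH.
Qed.

Lemma run_shift c es b pos a w :
  run_edges c es b pos.+1 (scons a w) =
  ((run_edges c es b pos w).1, (run_edges c es b pos w).2.+1).
Proof.
elim: es b pos => [|e es IH] b pos //=.
rewrite loop_shift /=; case: ifP => _ //; exact: IH.
Qed.

Lemma loop_cons c t cnt b pos w :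
  ((edge_loop c t cnt b pos w).1 + (edge_loop c t cnt b pos w).2 = b + pos)%N.
Proof.
elim: b cnt pos => [|b IH] cnt pos //=.
by case: ifP => _ //; rewrite IH addnS addSn.
Qed.

Lemma run_false c es b pos w : (run_edges c es b pos w).1 = false ->
  (run_edges c es b pos w).2 = (b + pos)%N.
Proof.
elim: es b pos => [|e es IH] b pos //=.
have := loop_cons (c%:Z) e 0 b pos w.
case: ifP => [/eqP -> /= |_ H /IH ->]; first by rewrite add0n.
by [].
Qed.

Lemma run_le c es b pos w : ((run_edges c es b pos w).2 <= b + pos)%N.
Proof.
elim: es b pos => [|e es IH] b pos /=; first exact: leq_addl.
have := loop_cons (c%:Z) e 0 b pos w.
case: ifP => [/eqP -> /= |_ H]; first by rewrite add0n => ->.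
by apply: leq_trans (IH _ _) _; rewrite H.
Qed.

Definition lcomp (R : Type) (H : nat -> nat -> (nat -> bool) -> R) (c : int) t cnt b
  (w : nat -> bool) : R :=
  H (edge_loop c t cnt b 0 w).1 (edge_loop c t cnt b 0 w).2 w.
Arguments lcomp {R} H c t cnt b w.

Lemma comp_zero R H c t cnt w : @lcomp R H c t cnt 0 w = H 0%N 0%N w.
Proof. by []. Qed.

Lemma comp_stop R H c t cnt b w : ~~ (cnt < c) -> @lcomp R H c t cnt b.+1 w = H b.+1 0%N w.
Proof. by rewrite /lcomp /= => /negbTE ->. Qed.

Lemma comp_step R H c t cnt b a w : cnt < c ->
  @lcomp R H c t cnt b.+1 (scons a w) =
  H (edge_loop c t (if (if a then t else ~~ t) then cnt + 1 else cnt - 1) b 0 w).1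
    (edge_loop c t (if (if a then t else ~~ t) then cnt + 1 else cnt - 1) b 0 w).2.+1
    (scons a w).
Proof. by rewrite /lcomp /= => ->; rewrite loop_shift. Qed.


Definition hh N (x : bool * {ffun 'I_N -> bool}) : {ffun 'I_N.+1 -> bool} :=
  [ffun i => if unlift ord0 i is Some j then x.2 j else x.1].
Definition gg N (w : {ffun 'I_N.+1 -> bool}) : bool * {ffun 'I_N -> bool} :=
  (w ord0, [ffun j => w (lift ord0 j)]).
Arguments hh {N}. Arguments gg {N}.

Lemma ext_hh N (a : bool) (w : {ffun 'I_N -> bool}) : ext (hh (a, w)) = scons a (ext w).
Proof.
apply: funext => -[|k]; rewrite /ext /=.
  case: insubP => [i _ Ei|] //.
  have -> : i = ord0 by apply: val_inj.
  by rewrite ffunE unlift_none.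
case: insubP => [i hi Ei|hn]; case: insubP => [j hj Ej|hn'] //=.
- have -> : i = lift ord0 j by apply: val_inj; rewrite /= Ei Ej.
  by rewrite ffunE liftK.
- by move: hn'; rewrite -ltnS hi.
- by move: hn; rewrite ltnS hj.
Qed.

Section Ex.
Variable R : realType.
Variable p : R.
Hypothesis hp0 : 0 < p.
Hypothesis hp1 : p < 1/2.

Fixpoint Ex (N : nat) (F : (nat -> bool) -> R) : R :=
  match N with
  | 0%N => F om0
  | N'.+1 => (1 - p) * Ex N' (fun w => F (scons true w)) +
             p * Ex N' (fun w => F (scons false w))
  end.

Lemma hp1' : 0 <= 1 - p. Proof. move: hp0 hp1 => h0 h1; lra. Qed.

Lemma Ex_mono N F G : (forall w, F w <= G w) -> Ex N F <= Ex N G.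
Proof.
elim: N F G => [|N IH] F G H /=; first exact: H.
by rewrite lerD // ler_wpM2l ?hp1' ?(ltW hp0) //; apply: IH.
Qed.

Lemma Ex_lin N a b F : Ex N (fun w => a + b * F w) = a + b * Ex N F.
Proof.
elim: N a b F => [|N IH] a b F //=.
rewrite (IH a b (fun w => F (scons true w))) (IH a b (fun w => F (scons false w))).
ring.
Qed.

Lemma Ex_const N a : Ex N (fun _ => a) = a.
Proof.
elim: N => [|N IH] //=; rewrite !IH; ring.
Qed.

Lemma Ex_add N a F : Ex N (fun w => a + F w) = a + Ex N F.
Proof.
rewrite -[in RHS](mul1r (Ex N F)) -Ex_lin; congr Ex; apply: funext => w; by rewrite mul1r.
Qed.

Lemma Ex_scale N b F : Ex N (fun w => b * F w) = b * Ex N F.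
Proof.
rewrite -[RHS]add0r -Ex_lin; congr Ex; apply: funext => w; by rewrite add0r.
Qed.

Lemma Ex_step N F Gt Gf u v :
  (forall w, F (scons true w) = Gt w) -> (forall w, F (scons false w) = Gf w) ->
  Ex N Gt <= u -> Ex N Gf <= v -> Ex N.+1 F <= (1 - p) * u + p * v.
Proof.
move=> /funext Et /funext Ef hu hv /=; rewrite Et Ef.
by rewrite lerD // ler_wpM2l ?hp1' ?(ltW hp0).
Qed.

Lemma Ex_step0 F Gt u :
  (forall w, F (scons true w) = Gt w) -> Ex 0 Gt <= u -> Ex 0 F <= u.
Proof. by move=> E /=; rewrite -E scons_om0. Qed.


Definition HinvP (H : nat -> nat -> (nat -> bool) -> R) :=
  forall b' pos a w, H b' pos.+1 (scons a w) = H b' pos w.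
Definition HcovP (H : nat -> nat -> (nat -> bool) -> R) :=
  forall b' pos a w, H b' pos.+1 (scons a w) = 1 + H b' pos w.

Lemma comp_step_inv H (c : int) (t : bool) (cnt : int) (b : nat) (a : bool) (w : nat -> bool) : HinvP H -> cnt < c ->
  lcomp H c t cnt b.+1 (scons a w) =
  lcomp H c t (if (if a then t else ~~ t) then cnt + 1 else cnt - 1) b w.
Proof. by move=> Hi hc; rewrite comp_step // Hi. Qed.

Lemma comp_step_cov H (c : int) (t : bool) (cnt : int) (b : nat) (a : bool) (w : nat -> bool) : HcovP H -> cnt < c ->
  lcomp H c t cnt b.+1 (scons a w) =
  1 + lcomp H c t (if (if a then t else ~~ t) then cnt + 1 else cnt - 1) b w.
Proof. by move=> Hi hc; rewrite comp_step // Hi. Qed.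

Lemma loop_any (c : int) t H A : HinvP H ->
  (forall b' M, Ex M (H b' 0%N) <= A) ->
  forall b N cnt, Ex N (lcomp H c t cnt b) <= A.
Proof.
move=> Hinv Hb; elim=> [|b IH] N cnt; first exact: Hb.
have [hc|hc] := boolP (cnt < c); last first.
  have -> : lcomp H c t cnt b.+1 = H b.+1 0%N by apply: funext => w; exact: comp_stop.
  exact: Hb.
case: N => [|N].
  exact: (@Ex_step0 (lcomp H c t cnt b.+1) _ _ (fun w => comp_step_inv H c t cnt b true w Hinv hc) (IH 0%N _)).
apply: le_trans (@Ex_step N (lcomp H c t cnt b.+1) _ _ _ _ (fun w => comp_step_inv H c t cnt b true w Hinv hc)
   (fun w => comp_step_inv H c t cnt b false w Hinv hc) (IH N _) (IH N _)) _.
by rewrite -mulrDl subrK mul1r.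
Qed.


Lemma hmu : 0 < 1 - 2 * p. Proof. move: hp0 hp1 => h0 h1; lra. Qed.

Lemma loop_true (c : int) H A : HcovP H ->
  (forall b' M, Ex M (H b' 0%N) <= A) ->
  forall b N cnt (k : nat), cnt = c - k%:Z ->
  Ex N (lcomp H c true cnt b) <= k%:R * (1 - 2 * p)^-1 + A.
Proof.
move=> Hcov Hb.
have hm := hmu.
set m := (1 - 2 * p)^-1.
have hm1 : (1 - 2 * p) * m = 1 by rewrite mulfV // gt_eqF.
have m0 : 0 <= m by rewrite invr_ge0 ltW.
have pm : 0 <= p * m by rewrite mulr_ge0 // ltW.
elim=> [|b IH] N cnt k ->.
  apply: le_trans (Hb 0%N N) _; rewrite lerDr mulr_ge0 //.
case: k => [|k].
  have hc : ~~ (c - 0%:Z < c) by rewrite subr0 ltxx.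
  have -> : lcomp H c true (c - 0%:Z) b.+1 = H b.+1 0%N by apply: funext => w; exact: comp_stop.
  by apply: le_trans (Hb _ N) _; rewrite mul0r add0r.
have hc : c - k.+1%:Z < c by lia.
have E1 : c - k.+1%:Z + 1 = c - k%:Z by lia.
have E2 : c - k.+1%:Z - 1 = c - k.+2%:Z by lia.
case: N => [|N].
  apply: (@Ex_step0 (lcomp H c true (c - k.+1%:Z) b.+1) _ _
     (fun w => comp_step_cov H c true (c - k.+1%:Z) b true w Hcov hc)).
  rewrite Ex_add; apply: le_trans (lerD (lexx 1) (IH 0%N _ k E1)) _.
  rewrite -[k.+1]addn1 natrD; lra.
apply: le_trans (@Ex_step N (lcomp H c true (c - k.+1%:Z) b.+1) _ _
   (1 + (k%:R * m + A)) (1 + ((k%:R + 2) * m + A))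
   (fun w => comp_step_cov H c true (c - k.+1%:Z) b true w Hcov hc)
   (fun w => comp_step_cov H c true (c - k.+1%:Z) b false w Hcov hc) _ _) _.
- by rewrite /= Ex_add lerD2l; apply: IH.
- have -> : k%:R + 2 = k.+2%:R :> R by rewrite -[k.+2]addn2 natrD.
  by rewrite /= Ex_add lerD2l; apply: IH.
rewrite -[k.+1]addn1 !natrD; set K := k%:R; lra.
Qed.

Definition Hf (b' pos : nat) (w : nat -> bool) : R := (b' != 0%N)%:R.

Lemma loop_false (c : int) :
  forall b N cnt (k : nat), cnt = c - k%:Z ->
  Ex N (lcomp Hf c false cnt b) <= (p / (1 - p)) ^+ k.
Proof.
have hq : 0 < 1 - p by move: hp0 hp1 => h0 h1; lra.
set r := p / (1 - p).
have hr : r * (1 - p) = p by rewrite divfK // gt_eqF.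
have r0 : 0 <= r by rewrite divr_ge0 // ltW.
have r1 : r <= 1 by rewrite ler_pdivrMr // mul1r; move: hp0 hp1 => h0 h1; lra.
have Hinv : HinvP Hf by [].
elim=> [|b IH] N cnt k ->.
  by rewrite /lcomp /Hf /= Ex_const exprn_ge0.
case: k => [|k].
  have hc : ~~ (c - 0%:Z < c) by rewrite subr0 ltxx.
  have -> : lcomp Hf c false (c - 0%:Z) b.+1 = Hf b.+1 0%N by apply: funext => w; exact: comp_stop.
  by rewrite /Hf /= Ex_const expr0.
have hc : c - k.+1%:Z < c by lia.
have E1 : c - k.+1%:Z + 1 = c - k%:Z by lia.
have E2 : c - k.+1%:Z - 1 = c - k.+2%:Z by lia.
have X0 : 0 <= r ^+ k by rewrite exprn_ge0.
case: N => [|N].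
  apply: (@Ex_step0 (lcomp Hf c false (c - k.+1%:Z) b.+1) _ _
     (fun w => comp_step_inv Hf c false (c - k.+1%:Z) b true w Hinv hc)).
  apply: le_trans (IH 0%N _ k.+2 E2) _.
  by rewrite [r ^+ k.+2]exprS ler_piMl // exprn_ge0.
apply: le_trans (@Ex_step N (lcomp Hf c false (c - k.+1%:Z) b.+1) _ _
   (r ^+ k.+2) (r ^+ k)
   (fun w => comp_step_inv Hf c false (c - k.+1%:Z) b true w Hinv hc)
   (fun w => comp_step_inv Hf c false (c - k.+1%:Z) b false w Hinv hc) _ _) _.
- exact: IH.
- exact: IH.
rewrite !exprS.
have h1 : r * (1 - p) * r ^+ k = p * r ^+ k by rewrite hr.
have h2 : r * (1 - p) * (r * r ^+ k) = p * (r * r ^+ k) by rewrite hr.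
lra.
Qed.


Definition Htr (c0 : nat) es (b' pos : nat) w : R :=
  ((b' != 0%N) && (run_edges c0 es b' pos w).1)%:R.

Lemma run_true_prob (c0 : nat) es : false \in es -> forall b N,
  Ex N (fun w => ((run_edges c0 es b 0 w).1)%:R) <= (p / (1 - p)) ^+ c0.
Proof.
have r0 : 0 <= p / (1 - p) by rewrite divr_ge0 // ?ltW //; move: hp0 hp1 => h0 h1; lra.
elim: es => [|e es IH] // hin b N.
case: e hin => hin.
  have hin' : false \in es by move: hin; rewrite inE.
  have -> : (fun w => ((run_edges c0 (true :: es) b 0 w).1)%:R) = lcomp (Htr c0 es) c0%:Z true 0 b.
    by apply: funext => w; rewrite /lcomp /Htr /=; case: eqP.
  apply: loop_any.
    by move=> b' pos a w; rewrite /Htr run_shift.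
  case=> [|b'] M; first by rewrite /Htr /= Ex_const exprn_ge0.
  by rewrite /Htr /=; apply: IH.
apply: le_trans (@Ex_mono N _ (lcomp Hf c0%:Z false 0 b) _) _.
  move=> w; rewrite /lcomp /Hf /=.
  case: (edge_loop _ _ _ _ _ _).1 => [|b'] /=; first by [].
  by case: (run_edges _ _ _ _ _).1.
by apply: loop_false; rewrite subrr.
Qed.

Definition Hq (c0 : nat) es (b' pos : nat) w : R :=
  (if b' == 0%N then pos else (run_edges c0 es b' pos w).2)%:R.

Lemma run_queries (c0 : nat) es : all id es -> forall b N,
  Ex N (fun w => ((run_edges c0 es b 0 w).2)%:R) <= (size es)%:R * (c0%:R * (1 - 2 * p)^-1).
Proof.
have hm := hmu.
have m0 : 0 <= (1 - 2 * p)^-1 by rewrite invr_ge0 ltW.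
elim: es => [|e es IH] /=; first by move=> _ b N; rewrite Ex_const mul0r.
case/andP=> he hall b N.
case: e he => // _.
have -> : (fun w => ((run_edges c0 (true :: es) b 0 w).2)%:R) = lcomp (Hq c0 es) c0%:Z true 0 b.
  by apply: funext => w; rewrite /lcomp /Hq /=; case: eqP.
apply: le_trans (@loop_true c0%:Z (Hq c0 es) ((size es)%:R * (c0%:R * (1 - 2 * p)^-1)) _ _ b N 0 c0 _) _.
- move=> b' pos a w; rewrite /Hq run_shift; case: (b' == 0%N) => /=; by rewrite mulrS.
- case=> [|b'] M; first by rewrite /Hq /= Ex_const mulr_ge0 // mulr_ge0.
  by rewrite /Hq /=; apply: IH.
- by rewrite subrr.
by rewrite -[(size es).+1]addn1 natrD mulrDl mul1r addrC mulrDl mul1r.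
Qed.


Lemma sum_Ex N F : \sum_(w : {ffun 'I_N -> bool}) weight p w * F (ext w) = Ex N F.
Proof.
elim: N F => [|N IH] F.
  rewrite (big_pred1 [ffun=> true]); last by move=> w; apply/esym/eqP/ffunP => -[].
  rewrite /weight big_ord0 mul1r /=; congr F; apply: funext => k; rewrite /ext.
  by case: insubP => // -[].
rewrite (reindex (@hh N)) /=; last first.
  exists (@gg N) => x _.
    case: x => a w; rewrite /gg /hh ffunE unlift_none; congr pair.
    by apply/ffunP => j; rewrite !ffunE liftK.
  rewrite /gg /hh; apply/ffunP => i; rewrite ffunE.
  by case: unliftP => [j ->|->] /=; rewrite ?ffunE.
transitivity (\sum_(a : bool) \sum_(w : {ffun 'I_N -> bool})
    weight p (hh (a, w)) * F (ext (hh (a, w)))).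
  by rewrite pair_bigA; apply: eq_bigr => -[a w].
have Wh : forall a (w : {ffun 'I_N -> bool}), weight p (hh (a, w)) = (if a then 1 - p else p) * weight p w.
  move=> a w; rewrite /weight big_ord_recl ffunE unlift_none; congr (_ * _).
  by apply: eq_bigr => i _; rewrite ffunE liftK.
rewrite big_bool /=.
under eq_bigr do rewrite Wh ext_hh -mulrA.
under [X in _ + X]eq_bigr do rewrite Wh ext_hh -mulrA.
rewrite -!mulr_sumr.
by rewrite (IH (fun w => F (scons true w))) (IH (fun w => F (scons false w))).
Qed.

Lemma probE N E : prob p N E = Ex N (fun w => (E w)%:R).
Proof.
rewrite /prob -sum_Ex big_mkcond /=; apply: eq_bigr => w _.
by case: (E (ext w)); rewrite ?mulr1 ?mulr0.
Qed.

End Ex.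
Arguments Ex {R} p N F.

Lemma aux1 (R : realType) (p : R) : 0 < p -> p < 1 / 2 -> p < 1 - p.
Proof. move=> h0 h1; lra. Qed.
Lemma aux2 (R : realType) (p : R) : 0 < p -> 1 - 2 * p <= 1.
Proof. move=> h0; lra. Qed.
Lemma aux3 (R : realType) (a x : R) : a <= x + 1 -> 1 <= x -> a <= 2 * x.
Proof. move=> h0 h1; lra. Qed.
Lemma aux4 (R : realType) (a x : R) : a - 1 < x -> a <= x + 1.
Proof. move=> h0; lra. Qed.
Lemma aux5 (R : realType) (m e n l L : R) :
  4 * m / L * (e * n * l) = (2 * (e * m)) * (2 * (l / L)) * n.
Proof. ring. Qed.
Lemma aux6 (R : realType) (e X m c n : R) :
  0 <= (e * X - m) * (c * n) -> n * (c * m) <= e * (X * c * n).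
Proof. move=> h; lra. Qed.

Theorem theorem1 (R : realType) (p : R) (hp0 : 0 < p) (hp1 : p < 1 / 2) :
  (forall (eps delta : R) (n : nat) (r : 'I_n -> bool),
      0 < eps < 1 -> 0 < delta < 1 ->
      ((forall i, r i) -> 1 - eps <= prob_output p eps delta r true) /\
      ((exists i, ~~ r i) -> 1 - delta <= prob_output p eps delta r false)) /\
  (exists (K delta0 : R), 0 < K /\ 0 < delta0 /\
     forall (eps delta : R) (n : nat) (r : 'I_n -> bool) (omega : nat -> bool),
       0 < eps < 1 -> 0 < delta < delta0 ->
       ((alg p eps delta r omega).2)%:R <= K * (eps^-1 * n%:R * ln (delta^-1))).
Proof.
have hq : 0 < 1 - p by move: hp0 hp1 => h0 h1; lra.
have hm := @hmu R p hp0 hp1.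
have q0 : 0 < (1 - p) / p by rewrite divr_gt0.
have hqp : 1 < (1 - p) / p by rewrite ltr_pdivlMr // mul1r; move: hp0 hp1 => h0 h1; lra.
set L := ln ((1 - p) / p).
have L0 : 0 < L by apply: ln_gt0.
have THR : forall delta, 0 < delta < 1 ->
   [/\ ln delta^-1 / L <= (threshold p delta)%:R,
       (threshold p delta)%:R <= ln delta^-1 / L + 1,
       (0 < threshold p delta)%N &
       (p / (1 - p)) ^+ threshold p delta <= delta].
  move=> delta /andP[d0 d1].
  have y0 : 0 < ln delta^-1 / L by rewrite divr_gt0 // ln_gt0 // invf_gt1.
  have cE : (threshold p delta)%:R = (Num.ceil (ln delta^-1 / L))%:~R :> R.
    rewrite /threshold natr_absz ger0_norm // ceil_ge0.
    by apply: lt_trans y0; rewrite ltrN10.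
  have ha : ln delta^-1 / L <= (threshold p delta)%:R by rewrite cE ceil_ge.
  have hb : (threshold p delta)%:R <= ln delta^-1 / L + 1.
    rewrite cE; have := ceil_itv (ln delta^-1 / L); case/andP => h _; move: h.
    rewrite intrB => h; exact: aux4.
  split => //.
    by rewrite -(ltr0n R); exact: lt_le_trans y0 ha.
  set c0 := threshold p delta.
  have -> : p / (1 - p) = ((1 - p) / p)^-1 by rewrite invf_div.
  rewrite exprVn -[delta]invrK lef_pV2 ?posrE ?exprn_gt0 ?invr_gt0 //.
  rewrite -ler_ln ?posrE ?exprn_gt0 ?invr_gt0 // lnXn // -mulr_natr.
  by rewrite mulrC -ler_pdivrMr.
split.
- move=> eps delta n r' /andP[e0 e1] hd.
  have [ha hb hc hd'] := THR delta hd.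
  set c0 := threshold p delta.
  set B := budget p eps delta n.
  set Ls := [seq r' i | i <- enum 'I_n].
  have Hout : forall b, prob_output p eps delta r' b =
      Ex p B (fun w => ((run_edges c0 Ls B 0 w).1 == b)%:R).
    by move=> b; rewrite /prob_output probE.
  split.
  + move=> hall.
    have Eq1 : (fun w => ((run_edges c0 Ls B 0 w).1 == true)%:R) =
        (fun w => 1 + (-1) * ((run_edges c0 Ls B 0 w).1 == false)%:R :> R).
      by apply: funext => w; case: (run_edges c0 Ls B 0 w).1 => /=; rewrite ?mulr1 ?mulr0 ?addr0 ?subrr.
    rewrite Hout Eq1 Ex_lin.
    suff : Ex p B (fun w => ((run_edges c0 Ls B 0 w).1 == false)%:R) <= eps.
      by rewrite mulN1r lerD2l lerN2.

    have hallL : all id Ls by apply/allP => x /mapP [i _ ->]; exact: hall.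
    have sizeL : size Ls = n by rewrite size_map size_enum_ord.
    have HQ := @run_queries R p hp0 hp1 c0 Ls hallL B B.
    rewrite sizeL in HQ.
    have [n0|npos] := posnP n.
      have L0' : Ls = [::] by apply/size0nil; rewrite sizeL.
      have -> : (fun w => ((run_edges c0 Ls B 0 w).1 == false)%:R) = (fun _ => 0 :> R).
        by apply: funext => w; rewrite L0'.
      by rewrite Ex_const ltW.
    have Hpt : forall w, B%:R * ((run_edges c0 Ls B 0 w).1 == false)%:R <=
                         ((run_edges c0 Ls B 0 w).2)%:R :> R.
      move=> w; case E: (run_edges c0 Ls B 0 w).1 => /=; first by rewrite mulr0.
      by rewrite mulr1 (run_false _ _ _ _ _ E) addn0.
    have H1 : B%:R * Ex p B (fun w => ((run_edges c0 Ls B 0 w).1 == false)%:R)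
               <= n%:R * (c0%:R * (1 - 2 * p)^-1).
      rewrite -Ex_scale; apply: le_trans HQ; exact: Ex_mono.
    have hX : eps^-1 * (1 - 2 * p)^-1 <= (`|Num.ceil (eps^-1 * (1 - 2 * p)^-1)|%N)%:R :> R.
      rewrite natr_absz ger0_norm ?ceil_ge // ceil_ge0.
      by apply: lt_trans (ltrN10 _) _; rewrite mulr_gt0 // invr_gt0.
    set X := (`|Num.ceil (eps^-1 * (1 - 2 * p)^-1)|%N)%:R in hX.
    have BE : B%:R = X * c0%:R * n%:R by rewrite /B /budget !natrM.
    have xm : (1 - 2 * p)^-1 <= eps * X.
      have := ler_wpM2l (ltW e0) hX; by rewrite mulrA mulfV ?gt_eqF // mul1r.
    have c0n : 0 <= c0%:R * n%:R :> R by rewrite mulr_ge0.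
    have HB : n%:R * (c0%:R * (1 - 2 * p)^-1) <= eps * B%:R.
      have xm2 : 0 <= eps * X - (1 - 2 * p)^-1 by rewrite subr_ge0.
      rewrite BE; exact: aux6 (mulr_ge0 xm2 c0n).
    have Bpos : 0 < B%:R :> R.
      have X0 : 0 < X by apply: lt_le_trans hX; rewrite mulr_gt0 // invr_gt0.
      by rewrite BE !mulr_gt0 // ltr0n.
    rewrite -(ler_pM2l Bpos); apply: le_trans H1 _.
    by apply: le_trans HB _; rewrite mulrC.
  + move=> [i hi].
    have hin : false \in Ls by apply/mapP; exists i; rewrite ?mem_enum // (negbTE hi).
    have Eq2 : (fun w => ((run_edges c0 Ls B 0 w).1 == false)%:R) =
        (fun w => 1 + (-1) * ((run_edges c0 Ls B 0 w).1)%:R :> R).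
      by apply: funext => w; case: (run_edges c0 Ls B 0 w).1 => /=; rewrite ?mulr1 ?mulr0 ?addr0 ?subrr.
    rewrite Hout Eq2 Ex_lin.
    have h := @run_true_prob R p hp0 hp1 c0 Ls hin B B.
    by rewrite mulN1r lerD2l lerN2; exact: le_trans h hd'.
- exists (4 * (1 - 2 * p)^-1 / L), (p / (1 - p)).
  split; first by rewrite !mulr_gt0 // invr_gt0.
  split; first by rewrite divr_gt0.
  move=> eps delta n r' w /andP[e0 e1] /andP[d0 dr].
  have r1 : p / (1 - p) < 1 by rewrite ltr_pdivrMr // mul1r; exact: aux1.
  have hd : 0 < delta < 1 by rewrite d0 (lt_trans dr r1).
  have [ha hb hc hd'] := THR delta hd.
  set c0 := threshold p delta.
  set y := ln delta^-1 / L.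
  have hy : 1 <= y.
    rewrite /y ler_pdivlMr // mul1r /L ler_ln ?posrE ?invr_gt0 //.
    by rewrite -invf_div lef_pV2 ?posrE ?divr_gt0 // ltW.
  have Hq : ((alg p eps delta r' w).2)%:R <= (budget p eps delta n)%:R :> R.
    by rewrite ler_nat /alg; apply: leq_trans (run_le _ _ _ _ _) _; rewrite addn0.
  apply: le_trans Hq _.
  set x := eps^-1 * (1 - 2 * p)^-1.
  have hx1 : 1 <= x.
    by rewrite mulr_ege1 // invf_ge1 // ?(ltW e1) // aux2.
  have hX : (`|Num.ceil x|%N)%:R <= x + 1 :> R.
    rewrite natr_absz ger0_norm; last first.
      by rewrite ceil_ge0; apply: lt_le_trans (ltrN10 _) (le_trans ler01 hx1).
    have := ceil_itv x; case/andP => h _; move: h; rewrite intrB => h; exact: aux4.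
  rewrite /budget !natrM.
  have -> : 4 * (1 - 2 * p)^-1 / L * (eps^-1 * n%:R * ln delta^-1) = (2 * x) * (2 * y) * n%:R.
    by rewrite /x /y aux5.
  apply: ler_wpM2r; first exact: ler0n.
  apply: ler_pM; [exact: ler0n | exact: ler0n | exact: aux3 | exact: aux3 hb hy].
Qed.
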